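(* Let $\beta,\kappa\ge0$. Let $\hat\sigma\sim\mu_{N,\beta,\kappa}$ and $\hat\sigma'\sim\mu_{N,\infty,\kappa}$ be independent, let $E=E_{\hat\sigma,\hat\sigma'}$, and set $\sigma=\hat\sigma$ and $\sigma'=\hat\sigma'|_E+\hat\sigma|_{E_N\setminus E}$. Then $\sigma'$ has law $\mu_{N,\infty,\kappa}$; thus the law $\mu_{N,(\beta,\kappa),(\infty,\kappa)}$ of $(\sigma,\sigma')$ is a coupling of $\mu_{N,\beta,\kappa}$ and $\mu_{N,\infty,\kappa}$.
   Context: $G=\mathbb Z_n$, $\rho$ faithful unitary one-dimensional. On $\mathbb Z^4$: $E_N,P_N$ oriented edges/plaquettes with vertices in $B_N=[-N,N]^4\cap\mathbb Z^4$; $\partial p$ oriented boundary edges; $\hat\partial e=\{p:e\in\partial p\}$. $\Sigma_{E_N}$: $\sigma:E_N\to G$, $\sigma_{-e}=-\sigma_e$, $(d\sigma)_p=\sum_{e\in\partial p}\sigma_e$; $\Sigma^0_{E_N}=\{d\sigma=0\}$. $\mu_{N,\beta,\kappa}(\sigma)\propto\exp(\beta\sum_{p\in P_N}\rho((d\sigma)_p)+\kappa\sum_{e\in E_N}\rho(\sigma_e))$ on $\Sigma_{E_N}$; $\mu_{N,\infty,\kappa}(\sigma)\propto\exp(\kappa\sum_{e\in E_N}\rho(\sigma_e))$ on $\Sigma^0_{E_N}$. $f|_S$ equals $f$ on $S$ and $0$ elsewhere. $\mathcal G(\sigma,\sigma')$ is the graph on $E_N$ with an edge between distinct $e,e'$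 if $e'=-e$, or $e,e'\in\mathrm{supp}\,\sigma\cup\mathrm{supp}\,\sigma'$ and ($\hat\partial e\cap\hat\partial e'\ne\emptyset$ or $\hat\partial e\cap\hat\partial(-e')\ne\emptyset$); $\mathcal C_{\mathcal G}(A)$ is the union of components meeting $A$; $E_{\sigma,\sigma'}=\mathcal C_{\mathcal G(\sigma,\sigma')}(\mathrm{supp}\,\sigma\cap\bigcup_{p\in\mathrm{supp}\,d\sigma}\partial p)$. *)

(* Defs.v *)
From mathcomp Require Import all_boot all_order all_algebra.
From mathcomp Require Import reals.
From mathcomp.analysis Require Import sequences exp.
From mathcomp.real_closed Require Import complex.

Set Implicit Arguments.
Unset Strict Implicit.
Unset Printing Implicit Defensive.
Import GRing.Theory Num.Theory.
Local Open Scope ring_scope.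

(* The box B_N = [-N,N]^4 ∩ Z^4, coordinates shifted by N: a vertex is a   *)
(* map 'I_4 -> {0,..,2N}, coordinate c standing for c - N.                 *)
Definition vtx (N : nat) := {ffun 'I_4 -> 'I_(N.*2).+1}.

(* x + e_i (only used when x i < 2N, so no truncation happens) *)
Definition vshift N (x : vtx N) (i : 'I_4) : vtx N :=
  [ffun k => if k == i then inord (x k).+1 else x k].

(* Raw oriented edges: (x, i, true) is the positively oriented edge from x  *)
(* to x + e_i; (x, i, false) is its reverse (from x + e_i to x).            *)
Definition redge N := (vtx N * 'I_4 * bool)%type.
Definition in_EN N (r : redge N) : bool := (r.1.1 r.1.2 < N.*2)%N.
(* E_N : oriented edges with both endpoints in B_N *)
Definition edge N := {r : redge N | in_EN r}.
Definition rneg N (r : redge N) : redge N := (r.1, ~~ r.2).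

(* Raw oriented plaquettes: (x, i, j), i <> j, with corners x, x+e_i,      *)
(* x+e_i+e_j, x+e_j traversed in that order; (x, j, i) is the reverse.     *)
Definition rplaq N := (vtx N * 'I_4 * 'I_4)%type.
Definition in_PN N (p : rplaq N) : bool :=
  [&& p.1.2 != p.2, (p.1.1 p.1.2 < N.*2)%N & (p.1.1 p.2 < N.*2)%N].
(* P_N : oriented plaquettes with all vertices in B_N *)
Definition plaq N := {p : rplaq N | in_PN p}.

Definition bd_raw N (p : rplaq N) : seq (redge N) :=
  let: (x, i, j) := p in
  [:: (x, i, true); (vshift x i, j, true); (vshift x j, i, false); (x, j, false)].

Definition in_bd N (r : redge N) (p : plaq N) : bool := r \in bd_raw (val p).

Definition conf N n := {ffun edge N -> 'Z_n}.

Definition ext N n (s : conf N n) (r : redge N) : 'Z_n :=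
  if (insub r : option (edge N)) is Some e then s e else 0.

Definition antisym N n (s : conf N n) : bool :=
  [forall e : edge N, ext s (rneg (val e)) == - s e].

Definition dconf N n (s : conf N n) (p : plaq N) : 'Z_n :=
  \sum_(r <- bd_raw (val p)) ext s r.

Definition closedconf N n (s : conf N n) : bool :=
  antisym s && [forall p : plaq N, dconf s p == 0].

Definition faithful_unitary_char (R : rcfType) n (rho : 'Z_n -> R[i]) : Prop :=
  [/\ (forall a b : 'Z_n, rho (a + b) = rho a * rho b),
      (forall a : 'Z_n, `|rho a| = 1) & injective rho].

Section Measures.
Variables (R : realType) (n N : nat) (rho : 'Z_n -> R[i]).

(* The exponent β Σ_p ρ((dσ)_p) + κ Σ_e ρ(σ_e) is real on Σ_{E_N} (sums    *)
(* over both orientations); we exponentiate its real part.                 *)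
Definition weightBK (beta kappa : R) (s : conf N n) : R :=
  if antisym s then
    expR (complex.Re ((beta%:C)%C * \sum_(p : plaq N) rho (dconf s p)
                      + (kappa%:C)%C * \sum_(e : edge N) rho (s e)))
  else 0.

Definition weightInf (kappa : R) (s : conf N n) : R :=
  if closedconf s then
    expR (complex.Re ((kappa%:C)%C * \sum_(e : edge N) rho (s e)))
  else 0.

Definition muBK (beta kappa : R) (s : conf N n) : R :=
  weightBK beta kappa s / \sum_(t : conf N n) weightBK beta kappa t.

Definition muInf (kappa : R) (s : conf N n) : R :=
  weightInf kappa s / \sum_(t : conf N n) weightInf kappa t.
End Measures.

Definition supp N n (s : conf N n) (e : edge N) : bool := s e != 0.

Definition gadj N n (s s' : conf N n) : rel (edge N) := fun e e' =>
  (e != e') &&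
  ((val e' == rneg (val e)) ||
   [&& supp s e || supp s' e, supp s e' || supp s' e' &
       [exists p : plaq N, in_bd (val e) p && in_bd (val e') p] ||
       [exists p : plaq N, in_bd (val e) p && in_bd (rneg (val e')) p]]).

Definition compsG N n (s s' : conf N n) (A : {set edge N}) : {set edge N} :=
  [set e | [exists a in A, connect (gadj s s') a e]].

Definition Eset N n (s s' : conf N n) : {set edge N} :=
  compsG s s' [set e | supp s e &&
                  [exists p : plaq N, (dconf s p != 0) && in_bd (val e) p]].

Definition newconf N n (s s' : conf N n) : conf N n :=
  [ffun e => if e \in Eset s s' then s' e else s e].

(* Main.v *)
Require Import Defs.
From mathcomp Require Import all_boot all_order all_algebra.
From mathcomp Require Import reals.
From mathcomp.analysis Require Import sequences exp.
From mathcomp.real_closed Require Import complex.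
Import GRing.Theory Num.Theory.
Local Open Scope ring_scope.
Set Implicit Arguments.
Unset Strict Implicit.

Section Comb.
Variables (N n : nat).
Implicit Types (s t u : conf N n).

Definition tau s s' : conf N n := [ffun e => if e \in Eset s s' then s e else s' e].

Lemma Econn s s' e0 e : e0 \in Eset s s' -> connect (gadj s s') e0 e -> e \in Eset s s'.
Proof.
rewrite /Eset /compsG !inE => /exists_inP [a Ha Hc] Hc2.
apply/exists_inP; exists a => //; exact: connect_trans Hc Hc2.
Qed.

Lemma Eseed s s' e p : supp s e -> in_bd (val e) p -> dconf s p != 0 -> e \in Eset s s'.
Proof.
move=> He Hb Hd; rewrite /Eset /compsG inE; apply/exists_inP; exists e => //.
rewrite inE He /=; apply/existsP; exists p; by rewrite Hd.
Qed.

Lemma EQ s s' e0 e p : e0 \in Eset s s' -> in_bd (val e0) p -> supp s e0 || supp s' e0 ->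
  in_bd (val e) p -> supp s e || supp s' e -> e \in Eset s s'.
Proof.
move=> H0 Hb0 Hs0 Hb Hs; case: (eqVneq e0 e) => [<-//|ne].
apply: (Econn H0); apply: connect1; rewrite /gadj ne /=; apply/orP; right.
rewrite Hs0 Hs /=; apply/orP; left; apply/existsP; exists p; by rewrite Hb0 Hb.
Qed.

Lemma dconf_some u p : dconf u p != 0 -> exists e : edge N, in_bd (val e) p && (u e != 0).
Proof.
move=> H; apply/existsP; move: H; apply: contraR; rewrite negb_exists => /forallP H.
rewrite /dconf big1_seq // => r /= Hr; rewrite /ext; case: insubP => [e _ Hv|//].
move: (H e); rewrite /in_bd Hv Hr /= negbK => /eqP //.
Qed.

Definition bA s s' p := [exists e : edge N, [&& e \in Eset s s', in_bd (val e) p & supp s e || supp s' e]].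

Lemma bdA s s' p r : bA s s' p -> r \in bd_raw (val p) ->
  ext (tau s s') r = ext s r /\ ext (newconf s s') r = ext s' r.
Proof.
move=> /existsP [e0 /and3P [H0 Hb0 Hs0]] Hr; rewrite /ext; case: insubP => [e _ Hv|//] /=.
rewrite !ffunE; case HE: (e \in Eset s s') => //.
have : ~~ (supp s e || supp s' e).
  apply/negP => Hs; move: (EQ H0 Hb0 Hs0 (p:=p) (e:=e)); rewrite HE /in_bd Hv Hr => /(_ isT Hs) //.
by rewrite negb_or /supp !negbK => /andP [/eqP -> /eqP ->].
Qed.

Lemma bdnA s s' p r : ~~ bA s s' p -> r \in bd_raw (val p) ->
  ext (tau s s') r = ext s' r /\ ext (newconf s s') r = ext s r.
Proof.
move=> HA Hr; rewrite /ext; case: insubP => [e _ Hv|//] /=.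
rewrite !ffunE; case HE: (e \in Eset s s') => //.
have : ~~ (supp s e || supp s' e).
  apply/negP => Hs; move/negP: HA; apply; apply/existsP; exists e; by rewrite HE /in_bd Hv Hr Hs.
by rewrite negb_or /supp !negbK => /andP [/eqP -> /eqP ->].
Qed.

Lemma dnA0 s s' p : ~~ bA s s' p -> dconf s p = 0.
Proof.
move=> HA; apply/eqP; apply/negPn/negP => Hd.
case: (dconf_some Hd) => e /andP [Hb He].
move/negP: HA; apply; apply/existsP; exists e; rewrite Hb.
by rewrite (@Eseed s s' e p He Hb Hd) /supp He.
Qed.

Lemma dtau s s' p : closedconf s' -> dconf (tau s s') p = dconf s p.
Proof.
move=> /andP [_ /forallP Hc].
case HA: (bA s s' p).
  rewrite /dconf; apply: eq_big_seq => r Hr; by case: (bdA HA Hr).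
rewrite (dnA0 (negbT HA)) -(eqP (Hc p)) /dconf; apply: eq_big_seq => r Hr; by case: (bdnA (negbT HA) Hr).
Qed.

Lemma dnew s s' p : closedconf s' -> dconf (newconf s s') p = 0.
Proof.
move=> /andP [_ /forallP Hc].
case HA: (bA s s' p).
  rewrite -(eqP (Hc p)) /dconf; apply: eq_big_seq => r Hr; by case: (bdA HA Hr).
rewrite -(dnA0 (negbT HA)) /dconf; apply: eq_big_seq => r Hr; by case: (bdnA (negbT HA) Hr).
Qed.

Lemma rneg_neq (r : redge N) : rneg r != r.
Proof. by case: r => [x b]; rewrite /rneg /= xpair_eqE eqxx /=; case: b. Qed.

Lemma rnegK (r : redge N) : rneg (rneg r) = r.
Proof. by case: r => [x b]; rewrite /rneg /= negbK. Qed.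

Lemma Eneg s s' e e2 : val e2 = rneg (val e) -> (e \in Eset s s') = (e2 \in Eset s s').
Proof.
have key : forall a b : edge N, val b = rneg (val a) -> a \in Eset s s' -> b \in Eset s s'.
  move=> a b Hab Ha; apply: (Econn Ha); apply: connect1; rewrite /gadj Hab eqxx orTb andbT.
  apply/negP => /eqP Eab; move: Hab (rneg_neq (val a)); rewrite -Eab => Hv; by rewrite -Hv eqxx.
move=> H; apply/idP/idP; first exact: key.
by apply: key; rewrite H rnegK.
Qed.

Lemma antisym_mix s s' (b : bool) : antisym s -> antisym s' ->
  antisym ([ffun e => if e \in Eset s s' then (if b then s e else s' e) else (if b then s' e else s e)] : conf N n).
Proof.
move=> /forallP Hs /forallP Hs'; apply/forallP => e.
move: (Hs e) (Hs' e); rewrite /ext; case: insubP => [e2 _ Hv|_] /=; rewrite !ffunE.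
  by rewrite -(Eneg _ _ Hv); case: (e \in Eset s s'); case: b.
by move=> H1 H2; case: (e \in Eset s s'); case: b.
Qed.

Lemma antisym_tau s s' : antisym s -> antisym s' -> antisym (tau s s').
Proof. exact: (antisym_mix true). Qed.

Lemma antisym_new s s' : antisym s -> antisym s' -> antisym (newconf s s').
Proof. exact: (antisym_mix false). Qed.

Lemma closed_new s s' : antisym s -> closedconf s' -> closedconf (newconf s s').
Proof.
move=> Hs Hc; rewrite /closedconf antisym_new //; last by case/andP: Hc.
by apply/forallP => p; rewrite dnew.
Qed.

Lemma supp_swap s s' e : supp (tau s s') e || supp (newconf s s') e = supp s e || supp s' e.
Proof. by rewrite /supp !ffunE; case: (e \in Eset s s') => //; rewrite orbC. Qed.

Lemma gadj_swap s s' : gadj (tau s s') (newconf s s') =2 gadj s s'.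
Proof. by move=> e e'; rewrite /gadj !supp_swap. Qed.

Lemma E_swap s s' : closedconf s' -> Eset (tau s s') (newconf s s') = Eset s s'.
Proof.
move=> Hc.
have Hseed : [set e | supp (tau s s') e &&
                  [exists p : plaq N, (dconf (tau s s') p != 0) && in_bd (val e) p]]
  = [set e | supp s e && [exists p : plaq N, (dconf s p != 0) && in_bd (val e) p]].
  apply/setP => e; rewrite !inE.
  have -> : [exists p, (dconf (tau s s') p != 0) && in_bd (val e) p]
          = [exists p, (dconf s p != 0) && in_bd (val e) p].
    by apply: eq_existsb => p; rewrite dtau.
  case: existsP => [[p /andP [Hd Hb]] | _]; last by rewrite !andbF.
  rewrite !andbT /supp ffunE; case HE: (e \in Eset s s') => //.
  case Hse: (s e == 0); last first.
    by move: HE; rewrite (@Eseed s s' e p _ Hb Hd) // /supp Hse.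
  case: (dconf_some Hd) => e1 /andP [Hb1 He1].
  have HE1 : e1 \in Eset s s' by exact: (@Eseed s s' e1 p He1 Hb1 Hd).
  apply/negbTE/negP => Hs'e.
  move: (EQ HE1 Hb1 (p:=p) (e:=e)); rewrite HE /supp He1 Hb Hs'e orbT /= => /(_ isT isT isT) //.
rewrite /Eset /compsG Hseed; apply/setP => e; rewrite !inE.
apply: eq_existsb => a; by rewrite (eq_connect (gadj_swap s s')).
Qed.

Lemma invol s s' : closedconf s' ->
  tau (tau s s') (newconf s s') = s /\ newconf (tau s s') (newconf s s') = s'.
Proof.
move=> Hc; rewrite /tau /newconf E_swap //; split; apply/ffunP => e; rewrite !ffunE;
  by case: (e \in Eset s s').
Qed.

End Comb.

Lemma ReD (R : rcfType) (a b : R[i]) : complex.Re (a + b) = complex.Re a + complex.Re b.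
Proof. by case: a => ? ?; case: b. Qed.

Section Main.
Variables (R : realType) (n N : nat) (rho : 'Z_n -> R[i]) (beta kappa : R).

Definition Wt (x : conf N n * conf N n) :=
  weightBK rho beta kappa x.1 * weightInf rho kappa x.2.
Definition good (x : conf N n * conf N n) := antisym x.1 && closedconf x.2.
Definition Phi (x : conf N n * conf N n) :=
  if good x then (tau x.1 x.2, newconf x.1 x.2) else x.

Lemma good_Phi x : good x -> good (Phi x).
Proof.
case: x => s s'; rewrite /Phi /good /= => /andP [Hs Hc]; rewrite Hs Hc /=.
rewrite antisym_tau //; last by case/andP: Hc.
exact: closed_new.
Qed.

Lemma Phi_invol x : Phi (Phi x) = x.
Proof.
case Hg: (good x); last by rewrite /Phi Hg Hg.
have Hg2 := good_Phi Hg.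
rewrite {1}/Phi Hg2 /Phi Hg /=.
clear Hg2; case: x Hg => s s' /andP [_ Hc] /=; by case: (invol s Hc) => -> ->.
Qed.

Lemma Wt_Phi x : Wt (Phi x) = Wt x.
Proof.
rewrite /Phi; case Hg: (good x) => //; case: x Hg => s s' /andP [Hs Hc].
rewrite /Wt /= /weightBK /weightInf antisym_tau //; last by case/andP: Hc.
rewrite closed_new // Hs Hc -!expRD -!ReD; congr (expR (complex.Re _)).
under eq_bigr => p _ do rewrite dtau //.
rewrite -!addrA -!mulrDr -!big_split /=; congr (_ + (_ * _)).
apply: eq_bigr => e _; rewrite !ffunE; case: (e \in Eset s s') => //; exact: addrC.
Qed.

Lemma Wt_bad x : ~~ good x -> Wt x = 0.
Proof.
case: x => s s'; rewrite /good /Wt /weightBK /weightInf /= negb_and.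
by case/orP => /negbTE ->; rewrite ?mul0r ?mulr0.
Qed.

Lemma zero_closed : closedconf ([ffun => 0] : conf N n).
Proof.
have Hext : forall r, ext ([ffun => 0] : conf N n) r = 0.
  by move=> r; rewrite /ext; case: insubP => [e _ _|//]; rewrite ffunE.
apply/andP; split; apply/forallP => x.
  by rewrite Hext ffunE oppr0.
by rewrite /dconf big1 // => r _; rewrite Hext.
Qed.

Lemma ZB_gt0 : 0 < \sum_(t : conf N n) weightBK rho beta kappa t.
Proof.
rewrite (bigD1 [ffun => 0]) //=; apply: ltr_wpDr.
  by apply: sumr_ge0 => t _; rewrite /weightBK; case: ifP => // _; exact: expR_ge0.
by rewrite /weightBK; case/andP: zero_closed => -> _; exact: expR_gt0.
Qed.

Lemma ZI_gt0 : 0 < \sum_(t : conf N n) weightInf rho kappa t.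
Proof.
rewrite (bigD1 [ffun => 0]) //=; apply: ltr_wpDr.
  by apply: sumr_ge0 => t _; rewrite /weightInf; case: ifP => // _; exact: expR_ge0.
by rewrite /weightInf zero_closed; exact: expR_gt0.
Qed.

End Main.

Theorem mainTheorem14 (R : realType) (n N : nat) (rho : 'Z_n -> R[i])
  (beta kappa : R) :
  (1 < n)%N -> faithful_unitary_char rho -> 0 <= beta -> 0 <= kappa ->
  (forall s0 : conf N n,
     \sum_(s : conf N n) \sum_(s' : conf N n)
        muBK rho beta kappa s * muInf rho kappa s' * (newconf s s' == s0)%:R
     = muInf rho kappa s0) /\
  (forall s0 : conf N n,
     \sum_(s : conf N n) \sum_(s' : conf N n)
        muBK rho beta kappa s * muInf rho kappa s' * (s == s0)%:R
     = muBK rho beta kappa s0).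
Proof.
move=> _ _ _ _.
set ZB := \sum_(t : conf N n) weightBK rho beta kappa t.
set ZI := \sum_(t : conf N n) weightInf rho kappa t.
have ZBn : ZB != 0 by apply: lt0r_neq0; apply: ZB_gt0.
have ZIn : ZI != 0 by apply: lt0r_neq0; apply: ZI_gt0.
have sumI : \sum_(s' : conf N n) muInf rho kappa s' = 1.
  by rewrite /muInf -mulr_suml divff.
have sumB : \sum_(s : conf N n) muBK rho beta kappa s = 1.
  by rewrite /muBK -mulr_suml divff.
split=> s0.
  have key : forall s s' : conf N n, muBK rho beta kappa s * muInf rho kappa s' * (newconf s s' == s0)%:R
     = (Wt rho beta kappa (s, s') * ((Phi (s, s')).2 == s0)%:R) / (ZB * ZI).
    move=> s s'; rewrite /muBK /muInf mulf_div mulrAC; congr (_ / _).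
    rewrite /Phi; case Hg: (good (s, s')) => //.
    by move: (@Wt_bad R n N rho beta kappa (s, s')); rewrite Hg /Wt /= => /(_ isT) ->; rewrite !mul0r.
  under eq_bigr => s _ do under eq_bigr => s' _ do rewrite key.
  rewrite pair_bigA /= -mulr_suml.
  under eq_bigr => x _ do rewrite -surjective_pairing.
  rewrite (reindex_inj (can_inj (@Phi_invol n N))) /=.
  under eq_bigr => x _ do rewrite Phi_invol Wt_Phi.
  rewrite -(pair_bigA _ (fun s s' => Wt rho beta kappa (s, s') * (s' == s0)%:R)) /=.
  have inner : forall s, \sum_j Wt rho beta kappa (s, j) * (j == s0)%:R = Wt rho beta kappa (s, s0).
    move=> s; rewrite (bigD1 s0) //= eqxx mulr1 big1 ?addr0 // => j /negbTE ->; by rewrite mulr0.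
  under eq_bigr => s _ do rewrite inner.
  by rewrite /Wt /= -mulr_suml -/ZB /muInf -/ZI invfM mulrACA divff // mul1r.
under eq_bigr => s _ do under eq_bigr => s' _ do rewrite mulrAC.
under eq_bigr => s _ do rewrite -mulr_sumr sumI mulr1.
rewrite (bigD1 s0) //= eqxx mulr1 big1 ?addr0 // => s /negbTE ->; by rewrite mulr0.
Qed.
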